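(* Let $H=(V,E)$ be a finite hypergraph with $E=\{e_1,\dots,e_{|E|}\}$, let $w:E\to\mathbb{Z}_2$ and $v\in V$, and define $\Lambda_v(|\psi_w\rangle)=|l_v(w_{e_1})\cdots l_v(w_{e_{|E|}})\rangle$, where $l_v(w_e)=\overline{w(e)}$ if $v\in e$ and $l_v(w_e)=w(e)$ otherwise. (i) If $|\psi_w\rangle\in\Pi$, then $\Lambda_v(|\psi_w\rangle)\in\Pi$. (ii) If $|\psi_w\rangle\in\mathcal{H}(E)\setminus\Pi$, then $\Lambda_v(|\psi_w\rangle)\in\mathcal{H}(E)\setminus\Pi$.
   Context: A hypergraph is $H=(V,E)$ with $V$ finite and $E\subset\mathcal{P}(V)$. For $p\in\mathbb{Z}_2$, $\overline{p}=p\oplus1$. For $w:E\to\mathbb{Z}_2$, $|\psi_w\rangle=|w(e_1)\cdots w(e_{|E|})\rangle$, and $\mathcal{H}(E)$ is the set of all such states. $w$ is a parity weight if there is $f:V\to\mathbb{Z}_2$ with $\overline{w(e)}=\bigoplus_{u\in e}f(u)$ for all $e\in E$; $\Pi=\{|\psi_w\rangle : w\text{ a parity weight}\}$. *)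

(* Defs.v *)
From mathcomp Require Import all_boot.
Set Implicit Arguments. Unset Strict Implicit. Unset Printing Implicit Defensive.

(* A finite hypergraph H = (V,E): V a finType, E : {set {set V}}.
   The fixed enumeration e_1,...,e_|E| of E is [enum E].
   Z_2 is bool, with xor (addb) as addition and negb as p |-> p+1. *)

Definition ket (V : finType) (E : {set {set V}}) (w : {set V} -> bool) : seq bool :=
  [seq w e | e <- enum E].

Definition HE (V : finType) (E : {set {set V}}) (psi : seq bool) : Prop :=
  exists w : {set V} -> bool, psi = ket E w.

Definition parity_weight (V : finType) (E : {set {set V}}) (w : {set V} -> bool) : Prop :=
  exists f : V -> bool,
    forall e, e \in E -> ~~ w e = \big[addb/false]_(u in e) f u.

Definition Pi (V : finType) (E : {set {set V}}) (psi : seq bool) : Prop :=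
  exists w : {set V} -> bool, parity_weight E w /\ psi = ket E w.

Definition lv (V : finType) (v : V) (e : {set V}) (b : bool) : bool :=
  if v \in e then ~~ b else b.

Definition Lambda (V : finType) (E : {set {set V}}) (v : V) (psi : seq bool) : seq bool :=
  [seq lv v eb.1 eb.2 | eb <- zip (enum E) psi].

(* Main.v *)
Require Import Defs.
From mathcomp Require Import all_boot.

Lemma Lambda_ket (V : finType) (E : {set {set V}}) (w : {set V} -> bool) (v : V) :
  Lambda E v (ket E w) = ket E (fun e => lv v e (w e)).
Proof.
rewrite /Lambda /ket; elim: (enum E) => //= e s IH; by rewrite IH.
Qed.

Lemma ket_eq (V : finType) (E : {set {set V}}) (w1 w2 : {set V} -> bool) :
  ket E w1 = ket E w2 -> forall e, e \in E -> w1 e = w2 e.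
Proof.
move=> /eq_in_map H e He; apply: H; by rewrite mem_enum.
Qed.

Lemma pw_ext (V : finType) (E : {set {set V}}) (w1 w2 : {set V} -> bool) :
  (forall e, e \in E -> w1 e = w2 e) -> parity_weight E w1 -> parity_weight E w2.
Proof.
move=> H [f Hf]; exists f => e He; rewrite -H //; exact: Hf.
Qed.

Lemma Pi_iff (V : finType) (E : {set {set V}}) (w : {set V} -> bool) :
  Pi E (ket E w) <-> parity_weight E w.
Proof.
split.
- move=> [w' [Hp Hk]]; apply: (@pw_ext _ _ w') Hp => e He; symmetry; exact: ket_eq Hk e He.
- move=> Hp; by exists w.
Qed.

Lemma toggle (V : finType) (E : {set {set V}}) (w : {set V} -> bool) (v : V) :
  parity_weight E w -> parity_weight E (fun e => lv v e (w e)).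
Proof.
move=> [f Hf]; exists (fun u => if u == v then ~~ f u else f u) => e He.
rewrite /lv; case: ifP => Hv.
- rewrite Hf // (bigD1 v Hv) /= [X in _ = X](bigD1 v Hv) /= eqxx.
  rewrite [X in _ = _ (+) X](eq_bigr f); last by move=> u /andP [_ /negbTE ->].
  by case: (f v); case: (\big[addb/false]_(i in e | i != v) f i).
- rewrite Hf //; apply: eq_bigr => u Hu.
  case: eqP => // Huv; by rewrite Huv Hv in Hu.
Qed.

Lemma lv_inv (V : finType) (v : V) e b : lv v e (lv v e b) = b.
Proof. rewrite /lv; by case: (v \in e); case: b. Qed.

Theorem lemma5 (V : finType) (E : {set {set V}}) (w : {set V} -> bool) (v : V) :
  (Pi E (ket E w) -> Pi E (Lambda E v (ket E w))) /\
  (HE E (ket E w) /\ ~ Pi E (ket E w) ->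
     HE E (Lambda E v (ket E w)) /\ ~ Pi E (Lambda E v (ket E w))).
Proof.
rewrite Lambda_ket; split.
  by move=> /Pi_iff H; apply/Pi_iff; exact: toggle.
move=> [_ Hn]; split; first by eexists.
move=> /Pi_iff /(@toggle _ _ _ v) H; apply: Hn; apply/Pi_iff; apply: (@pw_ext _ _ (fun e => lv v e (lv v e (w e)))) H => e _; exact: lv_inv.
Qed.
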